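(* Let $x$ be a variable over a finite abelian group $H$. Then there is a variable gadget for $x$ with at most $4|H|\log_2^2|H|$ auxiliary vertices, at most $7|H|\log_2^2|H|$ edges, and maximum clique size at most $\min\{4,|H|\}$.
   Context: For a variable $x$ over $H$, let $V_x=\{x\mapsto a: a\in H\}$ be a set of $|H|$ vertices. A variable gadget for $x$ is a graph $G=(V_x\cup V_A,E)$ (the vertices of $V_A$ are called auxiliary) such that: (Completeness) for each $a\in H$, $G$ has an automorphism $f_a$ with $f_a(x\mapsto b)=x\mapsto(a+b)$ for all $b\in H$; (Soundness) for every automorphism $f$ of $G$ there exists $a\in H$ with $f(x\mapsto b)=x\mapsto(a+b)$ for all $b\in H$. *)

(* Defs.v *)
From Stdlib Require Import Reals.
From mathcomp Require Import all_boot all_fingroup all_algebra.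
Set Implicit Arguments. Unset Strict Implicit. Unset Printing Implicit Defensive.

(* Vertex type of a gadget for a variable x over H with n auxiliary vertices:
   inl a is the vertex (x |-> a), inr i is the i-th auxiliary vertex. *)
Definition gvert (H : finType) (n : nat) : finType := (H + 'I_n)%type.

Section Graphs.
Variable V : finType.

Definition simple_graph (e : rel V) : Prop :=
  (forall u v, e u v = e v u) /\ (forall u, e u u = false).

Definition edge_set (e : rel V) : {set {set V}} :=
  [set E : {set V} | [exists u, exists v, [&& u != v, e u v & E == [set u; v]]]].

Definition is_clique (e : rel V) (A : {set V}) : Prop :=
  forall u v, u \in A -> v \in A -> u != v -> e u v.

Definition is_automorphism (e : rel V) (f : {perm V}) : Prop :=
  forall u v, e (f u) (f v) = e u v.
End Graphs.

Definition variable_gadget (H : finZmodType) (n : nat) (e : rel (gvert H n)) : Prop :=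
  simple_graph e /\
  (forall a : H, exists f : {perm gvert H n}, is_automorphism e f /\
      forall b : H, f (inl b) = inl (GRing.add a b)) /\
  (forall f : {perm gvert H n}, is_automorphism e f ->
      exists a : H, forall b : H, f (inl b) = inl (GRing.add a b)).

Definition log2 (x : R) : R := Rdiv (ln x) (ln 2).

Definition size_bound (c : R) (h : nat) : R :=
  Rmult (Rmult c (INR h)) (Rmult (log2 (INR h)) (log2 (INR h))).

(* Main.v *)
Require Import Defs.
From Stdlib Require Import Reals Lra.
From mathcomp Require Import all_boot all_fingroup all_algebra.
From mathcomp Require Import all_solvable.
From mathcomp Require Import zify.
Set Implicit Arguments. Unset Strict Implicit. Unset Printing Implicit Defensive.
Import GRing.Theory.

Lemma gen_seq (H : finZmodType) : exists s : seq H,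
  [/\ (<<[set x in s]>>)%g = [set: H], (0%R:H) \notin s & 2 ^ size s <= #|H|].
Proof.
suff: forall m (s : seq H), #|~: (<<[set x in s]>>)%g| <= m -> (0%R:H) \notin s ->
   2 ^ size s <= #|(<<[set x in s]>>)%g| -> exists s : seq H,
  [/\ (<<[set x in s]>>)%g = [set: H], (0%R:H) \notin s & 2 ^ size s <= #|H|].
  move=> /(_ #|H| [::]); apply=> //; first by rewrite max_card.
  by rewrite cardG_gt0.
elim=> [|m IH] s hc h0 h2.
  exists s; split=> //; last by apply: leq_trans h2 (max_card _).
  apply/setP=> x; rewrite inE; apply/negPn/negP => hx.
  have : x \in ~: (<<[set x in s]>>)%g by rewrite inE.
  by move: hc; rewrite leqn0 => /eqP/cards0_eq ->; rewrite inE.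
have [hT|hT] := eqVneq (<<[set x in s]>>)%g [set: H].
  by exists s; split=> //; apply: leq_trans h2 (max_card _).
have [g hg] : exists g, g \notin (<<[set x in s]>>)%g.
  apply/existsP; move: hT; apply: contraR; rewrite negb_exists => /forallP hf.
  by apply/eqP/setP=> x; rewrite inE; apply/negPn/(hf x).
have g0 : g != 0%R.
  by apply: contraNneq hg => ->; apply: (group1 (<<[set x in s]>>)%G).
have sub : (<<[set x in s]>>)%g \proper (<<[set x in g :: s]>>)%g.
  apply/properP; split.
    by apply: genS; apply/subsetP=> x; rewrite !inE => ->; rewrite orbT.
  by exists g => //; apply: mem_gen; rewrite !inE eqxx.
apply: (IH (g :: s)).
- have: #|~: (<<[set x in g :: s]>>)%g| < #|~: (<<[set x in s]>>)%g|.
    by apply: proper_card; rewrite properC.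
  by move=> h; rewrite -ltnS; apply: leq_trans h hc.
- by rewrite inE negb_or eq_sym g0.
- rewrite /= expnS.
  have hd := cardSg (proper_sub sub).
  have hl := proper_card sub.
  case/dvdnP: hd => q hq.
  rewrite hq; apply: leq_mul => //.
  move: hl; rewrite hq; case: q hq => [|[|q]] //= hq.
  by rewrite mul1n ltnn.
Qed.

Section Inv.
Variable T : finType.
Variable e : rel T.
Definition cnt (p : pred T) (u : T) := #|[set w | e u w && p w]|.
Definition isL u := cnt predT u == 1.
Definition nL u := cnt isL u.
Definition isY u := cnt predT u == 2.
Definition nY u := cnt isY u.
Definition isV u := [&& 2 < cnt predT u, nL u == 0 & nY u == 0].

Variable f : {perm T}.
Hypothesis hf : forall u v, e (f u) (f v) = e u v.

Lemma cnt_inv (p : pred T) : (forall w, p (f w) = p w) -> forall u, cnt p (f u) = cnt p u.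
Proof.
move=> hp u; rewrite /cnt -[RHS](card_imset _ (@perm_inj _ f)); apply: eq_card => w.
by rewrite inE -(permKV f w) mem_imset ?inE ?hf ?hp //; apply: perm_inj.
Qed.

Lemma deg_inv u : cnt predT (f u) = cnt predT u.
Proof. by apply: cnt_inv. Qed.
Lemma isL_inv u : isL (f u) = isL u.
Proof. by rewrite /isL deg_inv. Qed.
Lemma nL_inv u : nL (f u) = nL u.
Proof. by apply: cnt_inv; apply: isL_inv. Qed.
Lemma isY_inv u : isY (f u) = isY u.
Proof. by rewrite /isY deg_inv. Qed.
Lemma nY_inv u : nY (f u) = nY u.
Proof. by apply: cnt_inv; apply: isY_inv. Qed.
Lemma isV_inv u : isV (f u) = isV u.
Proof. by rewrite /isV deg_inv nL_inv nY_inv. Qed.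
End Inv.

Lemma three_card (T : finType) (S : {set T}) a b c : a \in S -> b \in S -> c \in S ->
  a != b -> a != c -> b != c -> 2 < #|S|.
Proof.
move=> ha hb hc hab hac hbc.
have : #|[set a; b; c]| <= #|S|.
  by apply: subset_leq_card; apply/subsetP => x; rewrite !inE => /orP[/orP[]|] /eqP ->.
apply: leq_trans; rewrite -setUA cardsU1 cards2 hbc !inE negb_or hab hac.
by [].
Qed.

Section Gadget.
Variable H : finZmodType.
Variable s : seq H.
Hypothesis s0 : (0%R : H) \notin s.
Local Notation k := (size s).
Definition gi (i : 'I_k) : H := nth 0%R s i.
Lemma gi_neq0 i : gi i != 0%R.
Proof. by apply: contraNneq s0 => <-; apply: mem_nth. Qed.

Definition Aux := (H * 'I_k * 'I_k.+3)%type.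
Definition W := (H + Aux)%type.

Definition Rr (i j j' : nat) : bool :=
  ((j == 0) && (j' == 1)) || ((j == 1) && (j' == 2)) || [&& j == 0, 3 <= j' & j' <= i + 3].

Definition rW (u v : W) : bool :=
  match u, v with
  | inl b, inr (c, i, j) =>
      ((c == b) && ((j == 0 :> nat) || (j == 2 :> nat))) || ((j == 2 :> nat) && (c + gi i == b)%R)
  | inr (c, i, j), inr (c', i', j') => [&& c == c', i == i' & Rr i j j']
  | _, _ => false
  end.
Definition eW (u v : W) := rW u v || rW v u.

Lemma eW_sym u v : eW u v = eW v u.
Proof. by rewrite /eW orbC. Qed.
Lemma eW_irr u : eW u u = false.
Proof.
case: u => [b|[[c i] j]] //; rewrite /eW /= !eqxx /= orbb /Rr.
by case: (j : nat) => [|[|[|j']]].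
Qed.

Lemma eW_ll b b' : eW (inl b) (inl b') = false.
Proof. by []. Qed.
Lemma eW_lr b c i j : eW (inl b) (inr (c, i, j)) =
  ((c == b) && ((j == 0 :> nat) || (j == 2 :> nat))) || ((j == 2 :> nat) && (c + gi i == b)%R).
Proof. by rewrite /eW /= orbF. Qed.
Lemma eW_rl b c i j : eW (inr (c, i, j)) (inl b) =
  ((c == b) && ((j == 0 :> nat) || (j == 2 :> nat))) || ((j == 2 :> nat) && (c + gi i == b)%R).
Proof. by rewrite eW_sym eW_lr. Qed.
Lemma eW_rr c i j c' i' j' : eW (inr (c, i, j)) (inr (c', i', j')) =
  [&& c == c', i == i' & Rr i j j' || Rr i j' j].
Proof.
rewrite /eW /= [c' == c]eq_sym [i' == i]eq_sym.
by case: eqVneq => //= _; case: eqVneq => [->|] //=.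
Qed.
Lemma inr_eqE c i (j : 'I_k.+3) c' i' (j' : 'I_k.+3) :
  (inr (c, i, j) == inr (c', i', j') :> W) = [&& c == c', i == i' & (j == j' :> nat)].
Proof. by rewrite [LHS]/eq_op /= !xpair_eqE andbA. Qed.
Lemma inl_eqE b b' : (inl b == inl b' :> W) = (b == b').
Proof. by []. Qed.
Lemma inlr_eqE b c i j : (inl b == inr (c, i, j) :> W) = false.
Proof. by []. Qed.
Lemma inrl_eqE b c i j : (inr (c, i, j) == inl b :> W) = false.
Proof. by []. Qed.

Definition cntW := cnt eW predT.
Lemma cnt1 u a : (forall w, eW u w = (w == a)) -> cntW u = 1.
Proof.
move=> h; rewrite /cntW /cnt -(cards1 a); apply: eq_card => w.
by rewrite !inE h andbT.
Qed.
Lemma cnt2 u a b : a != b -> (forall w, eW u w = (w == a) || (w == b)) -> cntW u = 2.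
Proof.
move=> hab h; have -> : 2 = (a != b).+1 by rewrite hab.
rewrite /cntW /cnt -cards2; apply: eq_card => w.
by rewrite !inE h andbT.
Qed.
Lemma cnt0 u : (forall w, eW u w = false) -> cntW u = 0.
Proof.
move=> h; apply/eqP; rewrite /cntW /cnt cards_eq0; apply/eqP/setP => w.
by rewrite !inE h.
Qed.
Lemma cnt3 u a b c : eW u a -> eW u b -> eW u c -> a != b -> a != c -> b != c -> 2 < cntW u.
Proof.
by move=> ha hb hc; apply: three_card; rewrite inE ?ha ?hb ?hc.
Qed.

Lemma D_leaf c (i : 'I_k) (j : 'I_k.+3) : 3 <= j -> j <= i + 3 -> cntW (inr (c, i, j)) = 1.
Proof.
move=> h1 h2.
have j0 : (j == 0 :> nat) = false by apply/eqP; lia.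
have j1 : (j == 1 :> nat) = false by apply/eqP; lia.
have j2 : (j == 2 :> nat) = false by apply/eqP; lia.
apply: (@cnt1 _ (inr (c, i, ord0))) => -[b|[[c' i'] j']].
  by rewrite eW_rl inlr_eqE j0 j2 andbF.
rewrite eW_rr inr_eqE /Rr j0 j1 j2 /= h1 h2 !andbF /= !andbT [c' == c]eq_sym [i' == i]eq_sym.
by [].
Qed.

Lemma D_dead c (i : 'I_k) (j : 'I_k.+3) : i + 3 < j -> cntW (inr (c, i, j)) = 0.
Proof.
move=> h.
have j0 : (j == 0 :> nat) = false by apply/eqP; lia.
have j1 : (j == 1 :> nat) = false by apply/eqP; lia.
have j2 : (j == 2 :> nat) = false by apply/eqP; lia.
have j3 : (j <= i + 3) = false by apply/negbTE; rewrite -ltnNge.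
apply: cnt0 => -[b|[[c' i'] j']].
  by rewrite eW_rl j0 j2 andbF.
by rewrite eW_rr /Rr j0 j1 j2 j3 !andbF.
Qed.

Definition o1 : 'I_k.+3 := inord 1.
Definition o2 : 'I_k.+3 := inord 2.
Definition o3 : 'I_k.+3 := inord 3.
Lemma o1E : (o1 : nat) = 1. Proof. by rewrite /o1 inordK //; lia. Qed.
Lemma o2E : (o2 : nat) = 2. Proof. by rewrite /o2 inordK //; lia. Qed.
Lemma o3E (i : 'I_k) : (o3 : nat) = 3.
Proof. by rewrite /o3 inordK //; have := ltn_ord i; lia. Qed.

Lemma D_Y c (i : 'I_k) (j : 'I_k.+3) : (j : nat) = 1 -> cntW (inr (c, i, j)) = 2.
Proof.
move=> hj; apply: (@cnt2 _ (inr (c, i, ord0)) (inr (c, i, o2))).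
  by rewrite inr_eqE o2E !eqxx.
move=> -[b|[[c' i'] j']].
  by rewrite eW_rl hj !inlr_eqE !andbF.
rewrite eW_rr !inr_eqE o2E /Rr hj /= [c' == c]eq_sym [i' == i]eq_sym.
case: eqVneq => //= _; case: eqVneq => //= _.
by rewrite !andbF !orbF andbT orbC.
Qed.

Lemma addr_neq (c x : H) : x != 0%R -> (c == c + x)%R = false.
Proof.
move=> hx; apply/negbTE; apply: contra hx => /eqP h.
have h2 : (c + 0 = c + x)%R by rewrite addr0.
by rewrite -(addrI _ h2).
Qed.

Lemma D_X c (i : 'I_k) (j : 'I_k.+3) : (j : nat) = 0 -> 2 < cntW (inr (c, i, j)).
Proof.
move=> hj; apply: (@cnt3 _ (inl c) (inr (c, i, o1)) (inr (c, i, o3))).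
- by rewrite eW_rl hj !eqxx ?orbT.
- by rewrite eW_rr o1E /Rr hj !eqxx.
- by rewrite eW_rr (o3E i) /Rr hj !eqxx /= leq_addl.
- by [].
- by [].
- by rewrite inr_eqE o1E (o3E i) !andbF.
Qed.

Lemma D_Z c (i : 'I_k) (j : 'I_k.+3) : (j : nat) = 2 -> 2 < cntW (inr (c, i, j)).
Proof.
move=> hj; apply: (@cnt3 _ (inl c) (inl (c + gi i)%R) (inr (c, i, o1))).
- by rewrite eW_rl hj !eqxx ?orbT.
- by rewrite eW_rl hj !eqxx !orbT.
- by rewrite eW_rr o1E /Rr hj !eqxx !orbT.
- by rewrite inl_eqE addr_neq // gi_neq0.
- by [].
- by [].
Qed.

Lemma D_V b (i0 : 'I_k) : 2 < cntW (inl b).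
Proof.
apply: (@cnt3 _ (inr (b, i0, ord0)) (inr (b, i0, o2)) (inr (b - gi i0, i0, o2)%R)).
- by rewrite eW_lr !eqxx.
- by rewrite eW_lr o2E !eqxx !orbT.
- by rewrite eW_lr o2E subrK !eqxx !orbT.
- by rewrite inr_eqE o2E !andbF.
- by rewrite inr_eqE o2E !andbF.
- rewrite inr_eqE eq_sym -{2}(subrK (gi i0) b) addr_neq //.
  by rewrite gi_neq0.
Qed.

Definition leafW (w : W) := if w is inr (c, i, j) then (3 <= j) && (j <= i + 3) else false.
Definition yW (w : W) := if w is inr (_, _, j) then (j == 1 :> nat) else false.
Definition xW (w : W) := if w is inr (_, _, j) then (j == 0 :> nat) else false.
Definition zW (w : W) := if w is inr (_, _, j) then (j == 2 :> nat) else false.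

Lemma kinds (i : 'I_k) (j : 'I_k.+3) :
  (j : nat) = 0 \/ (j : nat) = 1 \/ (j : nat) = 2 \/ ((3 <= j) && (j <= i + 3)) \/ i + 3 < j.
Proof.
have : (j : nat) = 0 \/ (j : nat) = 1 \/ (j : nat) = 2 \/ ((3 <= j) /\ (j <= i + 3)) \/ i + 3 < j by lia.
by case=> [|[|[|[[-> ->]|]]]]; auto.
Qed.

Lemma big_ne (x n : nat) : 2 < x -> n <= 2 -> (x == n) = false.
Proof. by move=> h1 h2; apply/negbTE; lia. Qed.

Lemma isL_char (i0 : 'I_k) w : isL eW w = leafW w.
Proof.
change ((cntW w == 1) = leafW w).
case: w => [b|[[c i] j]] /=.
  by rewrite big_ne ?(D_V b i0).
case: (kinds i j) => [hj|[hj|[hj|[hj|hj]]]].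
- by rewrite big_ne ?(D_X c i hj) // hj.
- by rewrite (D_Y c i hj); apply/esym/negbTE; lia.
- by rewrite big_ne ?(D_Z c i hj) // hj.
- by move: hj => /andP[h1 h2]; rewrite (D_leaf c h1 h2) h1 h2.
- by rewrite (D_dead c hj); apply/esym/negbTE; lia.
Qed.

Lemma isY_char (i0 : 'I_k) w : isY eW w = yW w.
Proof.
change ((cntW w == 2) = yW w).
case: w => [b|[[c i] j]] /=.
  by rewrite big_ne ?(D_V b i0).
case: (kinds i j) => [hj|[hj|[hj|[hj|hj]]]].
- by rewrite big_ne ?(D_X c i hj) // hj.
- by rewrite (D_Y c i hj) hj.
- by rewrite big_ne ?(D_Z c i hj) // hj.
- move: hj => /andP[h1 h2]; rewrite (D_leaf c h1 h2).
  by have -> : (j == 1 :> nat) = false by apply/eqP; lia.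
- rewrite (D_dead c hj).
  by have -> : (j == 1 :> nat) = false by apply/eqP; lia.
Qed.

Lemma cnt0' (p : pred W) u : (forall w, eW u w && p w = false) -> cnt eW p u = 0.
Proof.
move=> h; apply/eqP; rewrite /cnt cards_eq0; apply/eqP/setP => w.
by rewrite !inE h.
Qed.

Lemma nL_nX (i0 : 'I_k) w : ~~ xW w -> nL eW w = 0.
Proof.
move=> hx; apply: cnt0' => -[b'|[[c' i'] j']]; rewrite isL_char //= ?andbF //.
case hl: ((3 <= j') && (j' <= i' + 3)); last by rewrite andbF.
move/andP: hl => [h1 h2].
have j0 : (j' == 0 :> nat) = false by apply/eqP; lia.
have j1 : (j' == 1 :> nat) = false by apply/eqP; lia.
have j2 : (j' == 2 :> nat) = false by apply/eqP; lia.
rewrite andbT; case: w hx => [b|[[c i] j]] /= hx.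
  by rewrite eW_lr j0 j2 !andbF.
by rewrite eW_rr /Rr j0 j1 j2 (negbTE hx) !andbF.
Qed.

Lemma nY_V (i0 : 'I_k) b : nY eW (inl b) = 0.
Proof.
apply: cnt0' => -[b'|[[c' i'] j']]; rewrite isY_char //= ?andbF //.
case: eqVneq => hj; last by rewrite andbF.
by rewrite eW_lr hj !andbF.
Qed.

Lemma nY_Z c (i : 'I_k) (j : 'I_k.+3) : (j : nat) = 2 -> 0 < nY eW (inr (c, i, j)).
Proof.
move=> hj; apply/card_gt0P; exists (inr (c, i, o1)).
by rewrite inE isY_char //= eW_rr /Rr hj o1E !eqxx.
Qed.

Lemma nL_X c (i : 'I_k) (j : 'I_k.+3) : (j : nat) = 0 -> nL eW (inr (c, i, j)) = i.+1.
Proof.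
move=> hj.
have hi := ltn_ord i.
pose F := fun l : 'I_i.+1 => (inr (c, i, inord (l + 3)) : W).
have Finj : injective F.
  move=> l l' /eqP; rewrite /F inr_eqE !eqxx /= => /eqP.
  rewrite !inordK; first (by move=> h; apply/val_inj; rewrite /= ; lia);
  have := ltn_ord l; have := ltn_ord l'; lia.
rewrite -[RHS](card_ord i.+1) -(card_imset _ Finj).
apply: eq_card => w; rewrite inE isL_char //.
case: w => [b|[[c' i'] j']].
  by rewrite /= andbF; apply/esym/negbTE/imsetP => -[l _].
rewrite eW_rr /Rr hj /= andbF orbF.
apply/idP/imsetP.
  case/andP => /andP[/eqP <- /andP[/eqP <- h]] /andP[h1 h2].
  have hl : j' - 3 < i.+1 by lia.
  exists (Ordinal hl) => //; rewrite /F /=.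
  congr (inr (_, _, _)); apply/val_inj; rewrite /= inordK; lia.
case=> l _ /eqP; rewrite /F inr_eqE => /and3P[/eqP -> /eqP -> /eqP hj'].
have hl := ltn_ord l.
have hb : (2 < j') && (j' <= i + 3).
  by rewrite hj' inordK; [apply/andP; split; lia | lia].
by rewrite !eqxx hb /= orbT.
Qed.

Lemma isV_char (i0 : 'I_k) w : isV eW w = (if w is inl _ then true else false).
Proof.
case: w => [b|[[c i] j]].
  by rewrite /isV -/(cntW (inl b)) (D_V b i0) nL_nX // nY_V.
rewrite /isV -/(cntW _).
case: (kinds i j) => [hj|[hj|[hj|[hj|hj]]]].
- by rewrite nL_X // !andbF.
- by rewrite (D_Y c i hj).
- have := nY_Z c i hj; rewrite lt0n => /negbTE ->; by rewrite !andbF.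
- by move: hj => /andP[h1 h2]; rewrite (D_leaf c h1 h2).
- by rewrite (D_dead c hj).
Qed.

Section Sound.
Variable i0 : 'I_k.
Variable F : {perm W}.
Hypothesis hF : forall u v, eW (F u) (F v) = eW u v.

Lemma F_inl b : exists c, F (inl b) = inl c.
Proof.
have := isV_inv hF (inl b); rewrite !(isV_char i0).
by case: (F (inl b)) => // c _; exists c.
Qed.

Lemma step b c (i : 'I_k) : F (inl b) = inl c -> F (inl (b + gi i)%R) = inl (c + gi i)%R.
Proof.
move=> hb.
have hX : F (inr (b, i, ord0)) = inr (c, i, ord0).
  have e1 := hF (inl b) (inr (b, i, ord0)); rewrite hb eW_lr !eqxx /= in e1.
  have n1 := nL_inv hF (inr (b, i, ord0)); rewrite nL_X // in n1.
  move: e1 n1; case: (F _) => [d|[[c' i'] j']]; first by [].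
  rewrite eW_lr => e1 n1.
  case: (eqVneq (j' : nat) 0) => hj'; last first.
    by rewrite nL_nX // in n1; rewrite /= hj'.
  rewrite nL_X // in n1; move: e1; rewrite hj' /= andbT orbF => /eqP ->.
  have -> : i' = i by apply/val_inj; case: n1.
  by have -> : j' = ord0 by apply/val_inj.
have hY : F (inr (b, i, o1)) = inr (c, i, o1).
  have e1 := hF (inr (b, i, ord0)) (inr (b, i, o1)); rewrite hX eW_rr /Rr o1E !eqxx /= in e1.
  have y1 := isY_inv hF (inr (b, i, o1)); rewrite !(isY_char i0) /= o1E in y1.
  move: e1 y1; case: (F _) => [d|[[c' i'] j']]; first by [].
  rewrite eW_rr /= => /and3P[/eqP <- /eqP <- _] /eqP hj'.
  by have -> : j' = o1 by apply/val_inj; rewrite /= o1E.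
have hZ : F (inr (b, i, o2)) = inr (c, i, o2).
  have e1 := hF (inr (b, i, o1)) (inr (b, i, o2)); rewrite hY eW_rr /Rr o1E o2E !eqxx /= in e1.
  have n1 := nL_inv hF (inr (b, i, o2)); rewrite (nL_nX i0 (w := inr (b, i, o2))) /= ?o2E // in n1.
  move: e1 n1; case: (F _) => [d|[[c' i'] j']].
    by rewrite eW_rl o1E andbF.
  rewrite eW_rr /Rr o1E /= => /and3P[/eqP <- /eqP <- h] n1.
  case: (eqVneq (j' : nat) 0) => hj0.
    by rewrite nL_X in n1.
  have hj2 : (j' : nat) = 2.
    by move: h; rewrite (negbTE hj0) /= !orbF !andbF orbF => /eqP.
  by have -> : j' = o2 by apply/val_inj; rewrite /= o2E.
have e1 := hF (inr (b, i, o2)) (inl (b + gi i)%R); rewrite hZ eW_rl o2E !eqxx /= orbT in e1.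
have e2 := hF (inr (b, i, ord0)) (inl (b + gi i)%R).
rewrite hX eW_rl /= addr_neq ?gi_neq0 // in e2.
have [d hd] := F_inl (b + gi i)%R.
move: e1 e2; rewrite hd !eW_rl o2E /= => e1 e2.
case: (eqVneq c d) e1 e2 => [<-|_]; first by rewrite eqxx.
by rewrite /= => /eqP <-.
Qed.

Lemma sound_W : (<<[set x in s]>>)%g = [set: H] ->
  exists a, forall b, F (inl b) = inl (a + b)%R.
Proof.
move=> hgen.
have [a ha] := F_inl 0%R.
pose P b := F (inl b) == inl (a + b)%R.
have stepP b (i : 'I_k) : P b -> P (b + gi i)%R.
  by move=> /eqP h; apply/eqP; rewrite (step i h) addrA.
have stepm b (i : 'I_k) m : P b -> P (b + gi i *+ m)%R.
  elim: m => [|m IH] hb; first by rewrite mulr0n addr0.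
  by rewrite mulrS addrCA addrC; have := stepP _ i (IH hb); rewrite addrC.
have back b (i : 'I_k) : P (b + gi i)%R -> P b.
  move=> h; have := stepm _ i (#|H|.-1) h.
  have hH : 0 < #|H| by apply/card_gt0P; exists 0%R.
  rewrite -addrA -mulrS prednK //.
  have : ((gi i ^+ #|[set: H]|)%g = 1%g) by apply: expg_cardG; rewrite inE.
  by rewrite cardsT FinRing.zmodXgE => ->; rewrite addr0.
pose C := [set x : H | [forall b, P b == P (b + x)%R]].
have gC : group_set C.
  apply/group_setP; split.
    by rewrite inE; apply/forallP => b; rewrite addr0.
  move=> x y; rewrite !inE => /forallP hx /forallP hy; apply/forallP => b.
  by rewrite FinRing.zmodMgE (eqP (hx b)) addrA (eqP (hy (b + x)%R)).
have sub : [set x in s] \subset C.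
  apply/subsetP => x; rewrite inE => hx.
  have hi : index x s < k by rewrite index_mem.
  have -> : x = gi (Ordinal hi) by rewrite /gi /= nth_index.
  rewrite inE; apply/forallP => b; apply/eqP; apply/idP/idP => h.
    exact: stepP.
  exact: back h.
have : (<<[set x in s]>>)%g \subset Group gC by rewrite gen_subG.
rewrite hgen => /subsetP hall.
exists a => b; apply/eqP.
have := hall b (in_setT b); rewrite inE => /forallP /(_ 0%R) /eqP.
by rewrite add0r /P ha addr0 eqxx => <-.
Qed.
End Sound.

Definition trW (a : H) (w : W) : W :=
  match w with inl b => inl (a + b)%R | inr (c, i, j) => inr ((a + c)%R, i, j) end.
Lemma trW_inj a : injective (trW a).
Proof.
move=> [b|[[c i] j]] [b'|[[c' i'] j']] //= h.
  by case: h => /addrI ->.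
by case: h => /addrI -> -> ->.
Qed.
Lemma trW_e a u v : eW (trW a u) (trW a v) = eW u v.
Proof.
case: u => [b|[[c i] j]]; case: v => [b'|[[c' i'] j']] //=.
- by rewrite !eW_lr (inj_eq (addrI a)) -addrA (inj_eq (addrI a)).
- by rewrite !eW_rl (inj_eq (addrI a)) -addrA (inj_eq (addrI a)).
- by rewrite !eW_rr (inj_eq (addrI a)).
Qed.

Definition colW (w : W) : bool :=
  if w is inr (_, _, j) then (j == 0 :> nat) || (j == 2 :> nat) else false.
Lemma colW_e u v : eW u v -> colW u != colW v.
Proof.
case: u => [b|[[c i] j]]; case: v => [b'|[[c' i'] j']] //=.
- by rewrite eW_lr => /orP[/andP[_ ->]|/andP[-> _]] //=; rewrite orbT.
- by rewrite eW_rl => /orP[/andP[_ ->]|/andP[-> _]] //=; rewrite orbT.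
- rewrite eW_rr /Rr => /and3P[_ _].
  by case: (nat_of_ord j) => [|[|[|?]]]; case: (nat_of_ord j') => [|[|[|?]]]; rewrite ?andbF.
Qed.

Definition own (t : H * 'I_k * 'I_k.+4.+1) : W * W :=
  let: (c, i, t3) := t in
  match (t3 : nat) with
  | 0 => (inl c, inr (c, i, ord0))
  | 1 => (inl c, inr (c, i, o2))
  | 2 => (inl (c + gi i)%R, inr (c, i, o2))
  | 3 => (inr (c, i, ord0), inr (c, i, o1))
  | 4 => (inr (c, i, o1), inr (c, i, o2))
  | l.+1.+4 => (inr (c, i, ord0), inr (c, i, inord (l + 3)))
  end.

Lemma own_cover u v : rW u v -> exists t, own t = (u, v).
Proof.
case: u => [b|[[c i] j]]; case: v => [b'|[[c' i'] j']] //=.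
- move=> /orP[/andP[/eqP <- /orP[]]|/andP[h /eqP <-]].
  + move=> /eqP hj; exists (c', i', (inord 0 : 'I_k.+4.+1)); rewrite /= inordK //.
    by have -> : j' = ord0 by apply/val_inj.
  + move=> /eqP hj; exists (c', i', (inord 1 : 'I_k.+4.+1)); rewrite /= inordK //.
    by have -> : j' = o2 by apply/val_inj; rewrite /= o2E.
  + exists (c', i', (inord 2 : 'I_k.+4.+1)); rewrite /= inordK //.
    by have -> : j' = o2 by apply/val_inj; rewrite /= o2E; apply/eqP.
- move=> /and3P[/eqP <- /eqP <-]; rewrite /Rr => /orP[/orP[]|].
  + move=> /andP[/eqP h1 /eqP h2]; exists (c, i, (inord 3 : 'I_k.+4.+1)); rewrite /= inordK //.
    have -> : j = ord0 by apply/val_inj.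
    by have -> : j' = o1 by apply/val_inj; rewrite /= o1E.
  + move=> /andP[/eqP h1 /eqP h2]; exists (c, i, (inord 4 : 'I_k.+4.+1)); rewrite /= inordK //.
    have -> : j = o1 by apply/val_inj; rewrite /= o1E.
    by have -> : j' = o2 by apply/val_inj; rewrite /= o2E.
  + move=> /and3P[/eqP h1 h2 h3].
    have hi := ltn_ord i.
    have hl : j' - 3 + 5 < k.+4.+1 by lia.
    exists (c, i, Ordinal hl); rewrite /=.
    have -> : j' - 3 + 5 = (j' - 3).+1.+4 by lia.
    rewrite /=.
    have -> : j = ord0 by apply/val_inj.
    have -> : (inord (j' - 3 + 3) : 'I_k.+3) = j'.
      by apply/val_inj; rewrite /= inordK; lia.
    by [].
Qed.
End Gadget.

Section Transport.
Variable H : finZmodType.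
Variable s : seq H.
Local Notation AT := (H * 'I_(size s) * 'I_(size s).+3)%type.
Local Notation n := #|{: AT}|.
Definition dec (u : gvert H n) : W s :=
  match u with inl b => inl b | inr j => inr (enum_val j) end.
Definition enc (w : W s) : gvert H n :=
  match w with inl b => inl b | inr a => inr (enum_rank a) end.
Lemma decK : cancel dec enc.
Proof. by case=> [b|j] //=; rewrite enum_valK. Qed.
Lemma encK : cancel enc dec.
Proof. by case=> [b|a] //=; rewrite enum_rankK. Qed.
Definition eG : rel (gvert H n) := fun u v => eW (dec u) (dec v).
End Transport.

Section RB.
Local Open Scope R_scope.
Lemma pow2_INR k : INR (2 ^ k)%N = pow 2 k.
Proof.
elim: k => [|k IH]; first by [].
by rewrite expnS mult_INR IH /=.
Qed.

Lemma real_bound (c N h k : nat) : (2 ^ k <= h)%N -> (N <= c * (h * (k * k)))%N ->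
  Rle (INR N) (size_bound (INR c) h).
Proof.
move=> hk hN.
have hl2 : 0 < ln 2 by have := ln_lt_2; lra.
have hkL : INR k <= log2 (INR h).
  rewrite /log2 /Rdiv.
  apply (Rmult_le_reg_r (ln 2)) => //.
  rewrite Rmult_assoc Rinv_l; last by lra.
  rewrite Rmult_1_r -ln_pow; last by lra.
  have hp : 0 < pow 2 k by apply pow_lt; lra.
  have h2 : pow 2 k <= INR h by rewrite -pow2_INR; apply: le_INR; apply/leP.
  case: (Rle_lt_or_eq_dec _ _ h2) => h3; last by rewrite h3; lra.
  by apply Rlt_le, ln_increasing.
have hk0 := pos_INR k.
have hc0 := pos_INR c.
have hh0 := pos_INR h.
apply Rle_trans with (INR (c * (h * (k * k)))%N).
  by apply: le_INR; apply/leP.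
rewrite !mult_INR /size_bound.
have hkk : INR k * INR k <= log2 (INR h) * log2 (INR h).
  by apply Rmult_le_compat.
rewrite -Rmult_assoc; apply Rmult_le_compat_l => //.
by apply Rmult_le_pos.
Qed.
Lemma INR4 : INR 4 = 4. Proof. simpl; lra. Qed.
Lemma INR7 : INR 7 = 7. Proof. simpl; lra. Qed.
End RB.


Theorem lemma7p1 (H : finZmodType) :
  exists (n : nat) (e : rel (gvert H n)),
    variable_gadget e /\
    Rle (INR n) (size_bound 4 #|H|) /\
    Rle (INR #|edge_set e|) (size_bound 7 #|H|) /\
    (forall A : {set gvert H n}, is_clique e A -> #|A| <= minn 4 #|H|).
Proof.
have [s [hgen s0 hs]] := gen_seq H.
have hn : #|{: H * 'I_(size s) * 'I_(size s).+3}| = #|H| * size s * (size s).+3.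
  by rewrite !card_prod !card_ord.
exists #|{: H * 'I_(size s) * 'I_(size s).+3}|, (@eG _ s).
split; [|split; [|split]].
- split; [split|split].
  + by move=> u v; apply: eW_sym.
  + by move=> u; apply: eW_irr.
  + move=> a.
    have finj : injective (fun u : gvert H #|{: H * 'I_(size s) * 'I_(size s).+3}| => @enc _ s (trW a (@dec _ s u))).
      move=> u v /= h; have := congr1 (@dec _ s) h; rewrite !encK => /trW_inj h2.
      by rewrite -(decK u) -(decK v) h2.
    exists (perm finj); split.
      by move=> u v; rewrite /eG !permE !encK trW_e.
    by move=> b; rewrite permE.
  + move=> f hf.
    have Finj : injective (fun w : W s => @dec _ s (f (@enc _ s w))).
      move=> u v /= h; have := congr1 (@enc _ s) h; rewrite !decK => /perm_inj h2.
      by rewrite -(encK u) -(encK v) h2.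
    have hF : forall u v : W s, eW (perm Finj u) (perm Finj v) = eW u v.
      by move=> u v; rewrite !permE; have := hf (enc u) (enc v); rewrite /eG !encK.
    case: (posnP (size s)) => hk.
      have snil : s = [::] by apply/eqP; rewrite -size_eq0 hk.
      have h1 : forall x : H, x = 0%R.
        move=> x; have : x \in [set: H] by rewrite inE.
        rewrite -hgen snil.
        have -> : [set x in [::] : seq H] = set0 by apply/setP => y; rewrite !inE.
        by rewrite gen0 inE => /eqP.
      exists 0%R => b; case hfb: (f (inl b)) => [d|j].
        by rewrite add0r (h1 d) (h1 b).
      by exfalso; case: j hfb => m hm _; move: hm; rewrite hn hk muln0 mul0n.
    have i0 : 'I_(size s) := Ordinal hk.
    have [a ha] := sound_W s0 i0 hF hgen.
    exists a => b; have := ha b; rewrite permE => h.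
    by rewrite -(decK (f (inl b))) /= h.
- rewrite hn -INR4; apply: real_bound hs _.
  case: (size s) => [|k]; first by rewrite !muln0.
  have hle : k.+4 <= 4 * k.+1 by lia.
  have := leq_mul (leqnn (#|H| * k.+1)) hle; lia.
- have sub : edge_set (@eG _ s) \subset
      [set [set enc (own t).1; enc (own t).2] | t : H * 'I_(size s) * 'I_(size s).+4.+1].
    apply/subsetP => E; rewrite inE => /existsP[u /existsP[v /and3P[_ huv /eqP ->]]].
    move: huv; rewrite /eG /eW => /orP[] h; have [t ht] := own_cover s0 h;
      apply/imsetP; exists t => //; rewrite ht /= !decK //.
    by rewrite setUC.
  have hc : #|edge_set (@eG _ s)| <= #|H| * size s * (size s).+4.+1.
    apply: leq_trans (subset_leq_card sub) _.
    by apply: leq_trans (leq_imset_card _ _) _; rewrite !card_prod !card_ord.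
  rewrite -INR7; apply: real_bound hs _.
  apply: leq_trans hc _.
  case: (size s) => [|k]; first by rewrite !muln0.
  have hle : k.+2.+4 <= 7 * k.+1 by lia.
  have := leq_mul (leqnn (#|H| * k.+1)) hle; lia.
- move=> A hA.
  have h2 : #|A| <= 2.
    have := @leq_card_in _ _ (fun u => colW (dec u)) A; rewrite card_bool; apply.
    move=> x y hx hy /= hc; apply/eqP; apply/negPn/negP => hxy.
    by have := colW_e (hA x y hx hy hxy); rewrite hc eqxx.
  case: (ltnP 1 #|H|) => hH.
    by rewrite leq_min (leq_trans h2) //; apply: leq_trans h2 _; lia.
  have hk : size s = 0.
    move: hs; case: (size s) => // m; rewrite expnS => hm.
    have := expn_gt0 2 m; lia.
  have hN : #|{: H * 'I_(size s) * 'I_(size s).+3}| = 0 by rewrite hn hk muln0 mul0n.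
  have := max_card A; rewrite /gvert card_sum card_ord => hA1.
  have hA2 : #|A| <= #|H| by apply: leq_trans hA1 _; rewrite hN addn0.
  by rewrite leq_min hA2 andbT (leq_trans h2).
Qed.
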